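(* Let $n,g,k$ be integers with $k\ge1$ and $2\leq g\leq \left\lfloor \frac{n-k-2}{2}\right\rfloor$, and suppose $(n-k)g$ is odd. Let $a,b$ be integers with $a$ even, $b$ odd, $a\geq g+1$, $b\geq g+1$, $a+b=n-k$. Let $H_1$ be a connected $g$-regular graph of order $a$, and $H_2$ a connected graph of order $b$ in which one vertex has degree exactly $g+1$ and every other vertex has degree exactly $g$. Let $K_{1,k-1}$ be a star with center $v$, and let $H^k_n$ be a graph obtained from the disjoint union of $H_1$, $H_2$ and $K_{1,k-1}$ by adding exactly one edge from $v$ to $H_1$ and exactly one edge from $v$ to $H_2$. Then $\kappa^g(H^k_n)=k$.
   Context: For a connected graph $G=(V,E)$ and integer $g\ge0$: a set $F\subseteq V$ is a $g$-good-neighbor faulty set if $|N(v)\cap (V-F)|\geq g$ for every $v\in V-F$; a $g$-good-neighbor cut is such an $F$ with $G-F$ disconnected; $\kappa^g(G)$ is the minimum cardinality of a $g$-good-neighbor cut. *)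

(* Defs.v *)
From mathcomp Require Import all_boot.
Set Implicit Arguments. Unset Strict Implicit. Unset Printing Implicit Defensive.

Section Graphs.
Variable T : finType.
Implicit Types (e : rel T) (F X : {set T}).

Definition simple_graph e := symmetric e /\ irreflexive e.

Definition nbhd e (v : T) : {set T} := [set u | e v u].

Definition induced e X : rel T := [rel x y | [&& e x y, x \in X & y \in X]].

Definition connected_on e X := forall x y, x \in X -> y \in X -> connect (induced e X) x y.

Definition deg_in e X (x : T) := #|nbhd e x :&: X|.

Definition good_neighbor_faulty e (g : nat) F :=
  forall v, v \in ~: F -> g <= #|nbhd e v :&: ~: F|.

Definition disconnected_after e F :=
  exists x y, [/\ x \in ~: F, y \in ~: F & ~~ connect (induced e (~: F)) x y].

Definition good_neighbor_cut e (g : nat) F :=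
  good_neighbor_faulty e g F /\ disconnected_after e F.

Definition kappa_g_eq e (g m : nat) :=
  (exists F, good_neighbor_cut e g F /\ #|F| = m) /\
  (forall F, good_neighbor_cut e g F -> m <= #|F|).

End Graphs.

(* Main.v *)
Require Import Defs.
From mathcomp Require Import all_boot.

Lemma ind_sym (T:finType) (e:rel T) (S : {set T}) : symmetric e -> connect_sym (induced e S).
Proof.
move=> esym; apply: sym_connect_sym => p q; rewrite /induced /= [e p q]esym.
by case: (p \in S); case: (q \in S); rewrite ?andbF.
Qed.

Theorem lemma4p2 (n g k a b : nat) (T : finType) (e : rel T)
    (A B S : {set T}) (v : T) :
  1 <= k ->
  2 <= g -> g <= (n - k - 2)./2 ->
  odd ((n - k) * g) ->
  ~~ odd a -> odd b -> g + 1 <= a -> g + 1 <= b -> a + b = n - k ->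
  simple_graph e ->
  (* vertex set is the disjoint union of V(H1) = A, V(H2) = B, V(K_{1,k-1}) = S *)
  [disjoint A & B] -> [disjoint A & S] -> [disjoint B & S] ->
  A :|: B :|: S = [set: T] ->
  #|A| = a -> #|B| = b -> #|S| = k ->
  (* H1 : connected g-regular *)
  connected_on e A -> (forall x, x \in A -> deg_in e A x = g) ->
  (* H2 : connected, one vertex of degree g+1, all others of degree g *)
  connected_on e B ->
  (exists2 w, w \in B & deg_in e B w = g + 1 /\
     forall y, y \in B -> y != w -> deg_in e B y = g) ->
  (* K_{1,k-1} : star with centre v on S *)
  v \in S ->
  (forall s, s \in S -> s != v -> e v s) ->
  (forall s t, s \in S -> t \in S -> s != v -> t != v -> ~~ e s t) ->
  (* added edges: exactly one from v to H1, exactly one from v to H2, nothing else *)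
  #|nbhd e v :&: A| = 1 -> #|nbhd e v :&: B| = 1 ->
  (forall x y, x \in A -> y \in B -> ~~ e x y) ->
  (forall s x, s \in S -> s != v -> x \in A :|: B -> ~~ e s x) ->
  kappa_g_eq e g k.
Proof.
move=> k1 g2 _ _ _ _ ga gb _ [esym eirr] dAB dAS dBS cov cA cB cS
  conA degA conB [w wB [degw degB]] vS starE starN vA1 vB1 noAB noSx.
have inAS x : x \in A -> x \notin S by move=> xA; rewrite (disjointFr dAS xA).
have inBS x : x \in B -> x \notin S by move=> xB; rewrite (disjointFr dBS xB).
have notS x : x \notin S -> (x \in A) || (x \in B).
  move=> xS; have : x \in A :|: B :|: S by rewrite cov inE.
  by rewrite !inE (negbTE xS) orbF.
split.
- exists S; split=> //; split.
  + move=> x; rewrite inE => xS.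
    case/orP: (notS x xS) => [xA|xB].
    * rewrite -(degA x xA) /deg_in; apply: subset_leq_card.
      apply/subsetP=> y; rewrite !inE => /andP[-> yA] /=.
      by rewrite (disjointFr dAS yA).
    * apply: (@leq_trans (deg_in e B x)).
        by case: (eqVneq x w) => [->|xw]; [rewrite degw leq_addr|rewrite degB].
      rewrite /deg_in; apply: subset_leq_card.
      apply/subsetP=> y; rewrite !inE => /andP[-> yB] /=.
      by rewrite (disjointFr dBS yB).
  + have /card_gt0P [x xA] : 0 < #|A| by rewrite cA; apply: leq_trans ga; rewrite addn1.
    have /card_gt0P [y yB] : 0 < #|B| by rewrite cB; apply: leq_trans gb; rewrite addn1.
    exists x, y; split; [by rewrite inE inAS|by rewrite inE inBS|].
    have cl : closed (induced e (~: S)) (mem A).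
      have csym : connect_sym (induced e (~: S)).
        exact: ind_sym.
      apply: (intro_closed csym).
      move=> p q /= /andP[epq /andP[pS qS]] pA.
      rewrite inE in qS; case/orP: (notS q qS) => // qB.
      by move: (noAB p q pA qB); rewrite epq.
    have yA : (y \in A) = false by apply/negP=> yA; move: (disjointFr dAB yA); rewrite yB.
    by apply/negP=> cxy; have := closed_connect cl cxy; rewrite xA yA.
- move=> F [gF [x [y [xF yF nxy]]]].
  have leaf s : s \in S -> s != v -> s \in F.
    move=> sS sv; apply/negPn/negP=> sF.
    have := gF s; rewrite inE => /(_ sF) H.
    have : #|nbhd e s :&: ~: F| <= #|[set v]|.
      apply: subset_leq_card; apply/subsetP=> u; rewrite !inE => /andP[esu _].
      apply/negPn/negP=> uv.
      case: (boolP (u \in S)) => uS.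
        by move: (starN s u sS uS sv uv); rewrite esu.
      have := noSx s u sS sv; rewrite inE notS // => /(_ isT); by rewrite esu.
    rewrite cards1 => H1; have := leq_trans H H1; rewrite leqNgt.
    by move: g2 H1; clear; case: g => [|[|]].
  have SvF : S :\ v \subset F.
    by apply/subsetP=> s; rewrite !inE => /andP[sv sS]; exact: leaf.
  case: (boolP (v \in F)) => vF.
    rewrite -cS; apply: subset_leq_card; apply/subsetP=> s sS.
    by case: (eqVneq s v) => [->|sv] //; exact: leaf.
  case: (eqVneq (S :\ v) F) => [eF|neF].
    exfalso; move: nxy; apply/negP.
    have csym : connect_sym (induced e (~: F)).
      exact: ind_sym.
    have toV z : z \in ~: F -> connect (induced e (~: F)) z v.
      rewrite -{1}eF !inE negb_and negbK => /orP[/eqP->//|zS].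
      have side (X : {set T}) : connected_on e X -> #|nbhd e v :&: X| = 1 ->
          (forall t, t \in X -> t \notin S) -> z \in X ->
          connect (induced e (~: F)) z v.
        move=> conX vX XS zX.
        have /cards1P [p hp] : #|nbhd e v :&: X| == 1 by rewrite vX.
        have : p \in nbhd e v :&: X by rewrite hp inE.
        rewrite !inE => /andP[evp pX].
        apply: (connect_trans (y := p)).
          apply: connect_sub (conX z p zX pX) => s t /= /andP[est /andP[sX tX]].
          apply: connect1; rewrite /induced /= est -eF !inE (negbTE (XS _ sX)) (negbTE (XS _ tX)) !andbF //.
        apply: connect1; rewrite /induced /= esym evp -eF !inE (negbTE (XS _ pX)) andbF /=.
        by rewrite eqxx.
      case/orP: (notS z zS) => [zA|zB].
        exact: (side A conA vA1 inAS zA).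
      exact: (side B conB vB1 inBS zB).
    rewrite (same_connect csym (toV x xF)). by rewrite csym toV.
  have pr : S :\ v \proper F by rewrite properEneq neF SvF.
  have := proper_card pr; have := cardsD1 v S; rewrite vS cS add1n => ->.
  by [].
Qed.
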